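(* Let $X$ be a real Banach space. Then: (1) if $A\subseteq B\subseteq X$ then $\mathbf E(A)\le\mathbf E(B)$ and $\mathbf E_0(A)\le\mathbf E_0(B)$; (2) for every $A\subseteq X$, $\mathbf E_0(A)\ge\mathbf E(A)\ge\sup_{x\in A}\|x\|$; (3) if $K_{\mathcal B,\mathcal E}$ is a compact brick in $X$ then $\mathbf E(K_{\mathcal B,\mathcal E})=\sup_{x\in K_{\mathcal B,\mathcal E}}\|x\|$; (4) if $K_{\mathcal B,\mathcal E}$ is a compact brick in $X$ with $\mathcal B$ a $1$-unconditional basis, then $\mathbf E_0(K_{\mathcal B,\mathcal E})=\sup_{x\in K_{\mathcal B,\mathcal E}}\|x\|$.
   Context: A brick in $X$ is a set $K_{\mathcal B,\mathcal E}=\{x\in X:\ |e_n^*(x)|\le\varepsilon_n\ \forall n\}$, where $\mathcal B=(e_n)$ is a normalized Schauder basis of $X$ with biorthogonal functionals $(e_n^* )$ and $\mathcal E=(\varepsilon_n)$ is a sequence of nonnegative numbers. Its unconditional radius is $r^{\rm unc}(K_{\mathcal B,\mathcal E})=\sup_{\theta_n=\pm1}\|\sum_n\theta_n\varepsilon_ne_n\|$ (norm of a divergent series $=\infty$). The entropy of $A\subseteq X$ is $\mathbf E(A)=\inf\{r^{\rm unc}(K_{\mathcal B,\mathcal E}): A\subseteq K_{\mathcal B,\mathcal E}\}$, and the unconditional entropy $\mathbf E_0(A)$ is the same infimum restricted to bricks with $\mathcal B$ a $1$-unconditional basis (i.e. $\|\sum_n\theta_ne_n^*(x)e_n\|\le\|x\|$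 for all $x$ and all signs $\theta_n=\pm1$); the infimum of an empty set (or of only infinite values) is $\infty$. *)

(* Defs.v *)
From HB Require Import structures.
From mathcomp Require Import all_boot all_order all_algebra.
From mathcomp Require Import all_classical all_reals all_analysis.
Set Implicit Arguments. Unset Strict Implicit. Unset Printing Implicit Defensive.
Import Order.TTheory GRing.Theory Num.Theory.
Import numFieldNormedType.Exports.
Local Open Scope classical_set_scope.
Local Open Scope ring_scope.

Section Bricks.
Variables (R : realType) (X : completeNormedModType R).

Definition normalized_schauder_basis (e : nat -> X) (f : nat -> X -> R) : Prop :=
  (forall n, `|e n| = 1) /\
  (forall x : X, series (fun k => f k x *: e k) @ \oo --> x) /\
  (forall (x : X) (a : nat -> R),
      series (fun k => a k *: e k) @ \oo --> x -> forall n, a n = f n x).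

Definition is_sign (theta : nat -> R) : Prop :=
  forall n, theta n = 1 \/ theta n = -1.

Definition one_unconditional (e : nat -> X) (f : nat -> X -> R) : Prop :=
  forall (x : X) (theta : nat -> R), is_sign theta ->
    cvgn (series (fun k => theta k * f k x *: e k)) /\
    `|limn (series (fun k => theta k * f k x *: e k))| <= `|x|.

Definition brick (e : nat -> X) (f : nat -> X -> R) (eps : nat -> R) : set X :=
  [set x | forall n, `|f n x| <= eps n].

Definition r_unc (e : nat -> X) (eps : nat -> R) : \bar R :=
  ereal_sup [set (if `[< cvgn (series (fun k => theta k * eps k *: e k)) >]
                  then (`|limn (series (fun k => theta k * eps k *: e k))|)%:E
                  else +oo)%E | theta in is_sign].

Definition entropy (A : set X) : \bar R :=
  ereal_inf [set r | exists (e : nat -> X) (f : nat -> X -> R) (eps : nat -> R),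
    [/\ normalized_schauder_basis e f, (forall n, 0 <= eps n),
        A `<=` brick e f eps & r = r_unc e eps]].

Definition entropy0 (A : set X) : \bar R :=
  ereal_inf [set r | exists (e : nat -> X) (f : nat -> X -> R) (eps : nat -> R),
    [/\ normalized_schauder_basis e f /\ one_unconditional e f,
        (forall n, 0 <= eps n), A `<=` brick e f eps & r = r_unc e eps]].

Definition sup_norm (A : set X) : \bar R :=
  ereal_sup [set (`|x|)%:E | x in A].

End Bricks.

(* Main.v *)
Require Import Defs.
From mathcomp Require Import all_boot all_order all_algebra.
From mathcomp Require Import all_classical all_reals all_analysis.
From mathcomp Require Import ring lra.
Import Order.TTheory GRing.Theory Num.Theory.
Import numFieldNormedType.Exports.
Local Open Scope classical_set_scope.
Local Open Scope ring_scope.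

Section Aux.
Set Implicit Arguments.
Variables (R : realType) (X : completeNormedModType R).

Lemma norm_lim_le (u : nat -> X) (l : X) (r : R) :
  u @ \oo --> l -> (forall n, `|u n| <= r) -> `|l| <= r.
Proof.
move=> ul ur; have nl : (fun n => `|u n|) @ \oo --> `|l| by exact: cvg_norm.
rewrite -(cvg_lim _ nl) //; apply: limr_le; first by apply/cvg_ex; exists `|l|.
exact: nearW.
Qed.

Lemma fin_coef (e : nat -> X) (f : nat -> X -> R) (a : nat -> R) (N : nat) :
  normalized_schauder_basis e f -> (forall k, (N <= k)%N -> a k = 0) ->
  forall n, f n (\sum_(0 <= k < N) a k *: e k) = a n.
Proof.
move=> [_ [_ uniq]] aN n; symmetry; apply: uniq.
apply: cvg_near_cst; near=> m.
have Nm : (N <= m)%N by near: m; exact: nbhs_infty_ge.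
rewrite /series /= (big_cat_nat (leq0n N) Nm).
rewrite /= [X in (_ + X)%R]big_nat_cond [X in (_ + X)%R]big1 ?addr0 // => k /andP[/andP[Nk _] _].
by rewrite aN // scale0r.
Unshelve. all: by end_near. Qed.


Lemma in_brick (e : nat -> X) (f : nat -> X -> R) (eps a : nat -> R) (N : nat) :
  normalized_schauder_basis e f -> (forall n, 0 <= eps n) ->
  (forall k, `|a k| <= eps k) ->
  brick e f eps (\sum_(0 <= k < N) a k *: e k).
Proof.
move=> B e0 ae n.
have -> : \sum_(0 <= k < N) a k *: e k =
  \sum_(0 <= k < N) (if (k < N)%N then a k else 0) *: e k.
  by rewrite big_nat_cond [RHS]big_nat_cond; apply: eq_bigr => k /andP[/andP[_ ->]].
rewrite (@fin_coef e f _ N B); last by move=> k; rewrite ltnNge => ->.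
by case: ifP => _; rewrite ?normr0.
Qed.

Lemma conv_step (z v : X) (a c r : R) : `|a| <= c ->
  `|z + c *: v| <= r -> `|z - c *: v| <= r -> `|z + a *: v| <= r.
Proof.
move=> ac h1 h2.
have [c0|c0] := eqVneq c 0.
  by move: ac h1; rewrite c0 normr_le0 => /eqP ->; rewrite !scale0r.
have cp : 0 < c by rewrite lt0r c0 /= (le_trans (normr_ge0 a) ac).
move: ac; rewrite ler_norml => /andP[ca ac].
have id : (c + a) *: (z + c *: v) + (c - a) *: (z - c *: v) = (2 * c) *: (z + a *: v).
  rewrite !scalerDr !scalerN !scalerA.
  by rewrite addrACA -scalerDl -scaleNr -scalerDl; congr (_ *: _ + _ *: _); ring.
have ha : 0 <= c + a by lra.
have hb : 0 <= c - a by lra.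
have : `|(2 * c) *: (z + a *: v)| <= 2 * c * r.
  rewrite -id (le_trans (ler_normD _ _)) // !normrZ (ger0_norm ha) (ger0_norm hb).
  have -> : 2 * c * r = (c + a) * r + (c - a) * r by ring.
  by rewrite lerD // ler_wpM2l.
have h2c : 0 < 2 * c by lra.
by rewrite normrZ (gtr0_norm h2c) ler_pM2l.
Qed.


Definition signs_ok (e : nat -> X) (eps : nat -> R) (r : R) :=
  forall th, is_sign th -> cvgn (series (fun k => th k * eps k *: e k)) /\
    `|limn (series (fun k => th k * eps k *: e k))| <= r.

Lemma partial_bound (e : nat -> X) (eps : nat -> R) (r : R) (theta : nat -> R) (N : nat) :
  signs_ok e eps r -> is_sign theta ->
  `|\sum_(0 <= k < N) theta k * eps k *: e k| <= r.
Proof.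
move=> H ts.
pose t1 k := if (k < N)%N then theta k else 1.
pose t2 k := if (k < N)%N then theta k else -1.
have s1 : is_sign t1 by move=> k; rewrite /t1; case: ifP => _; [exact: ts | by left].
have s2 : is_sign t2 by move=> k; rewrite /t2; case: ifP => _; [exact: ts | by right].
have [c1 b1] := H _ s1; have [c2 b2] := H _ s2.
set P := \sum_(0 <= k < N) theta k * eps k *: e k.
set u1 := series (fun k => t1 k * eps k *: e k).
set u2 := series (fun k => t2 k * eps k *: e k).
have h1 : (fun n => u1 n + u2 n) @ \oo --> limn u1 + limn u2 by exact: cvgD.
have h2 : (fun n => u1 n + u2 n) @ \oo --> 2 *: P.
  apply: cvg_near_cst; near=> n.
  have Nn : (N <= n)%N by near: n; exact: nbhs_infty_ge.
  rewrite /u1 /u2 /series /= -big_split /= (big_cat_nat (leq0n N) Nn) /=.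
  rewrite [X in (_ + X)%R]big_nat_cond [X in (_ + X)%R]big1 ?addr0; last first.
    move=> k /andP[/andP[Nk _] _]; rewrite /t1 /t2 ltnNge Nk /=.
    by rewrite -scalerDl mulNr mul1r subrr scale0r.
  rewrite /P scaler_sumr big_nat_cond [RHS]big_nat_cond; apply: eq_bigr.
  move=> k /andP[/andP[_ kN] _]; rewrite /t1 /t2 kN -scalerDl scalerA.
  by congr (_ *: _); ring.
have e2 : limn u1 + limn u2 = 2 *: P by rewrite -(cvg_lim _ h1) // (cvg_lim _ h2).
have : `|2 *: P| <= 2 * r.
  rewrite -e2 (le_trans (ler_normD _ _)) //.
  have -> : 2 * r = r + r by ring.
  by rewrite lerD.
by rewrite normrZ ger0_norm // ler_pM2l.
Unshelve. all: by end_near. Qed.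

Lemma finite_convex (e : nat -> X) (eps : nat -> R) (r : R) (a : nat -> R) (N : nat) :
  (forall k, `|a k| <= eps k) ->
  forall y, (forall s, is_sign s -> `|y + \sum_(0 <= k < N) s k * eps k *: e k| <= r) ->
  `|y + \sum_(0 <= k < N) a k *: e k| <= r.
Proof.
move=> ae; elim: N => [|N IH] y H.
  by have := H (fun=> 1) (fun=> or_introl erefl); rewrite !big_geq.
have E : forall p q w : X, p + (q + w) = (p + w) + q.
  by move=> p q w; rewrite addrA addrAC.
rewrite big_nat_recr //= E; apply: IH => s ss.
set z := \sum_(0 <= k < N) s k * eps k *: e k.
have -> : y + a N *: e N + z = (y + z) + a N *: e N by rewrite addrAC.
pose s1 k := if k == N then 1 else s k.
pose s2 k := if k == N then -1 else s k.
have ss1 : is_sign s1 by move=> k; rewrite /s1; case: ifP => _; [by left | exact: ss].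
have ss2 : is_sign s2 by move=> k; rewrite /s2; case: ifP => _; [by right | exact: ss].
have zE : forall t : nat -> R, (forall k, (k < N)%N -> t k = s k) ->
    \sum_(0 <= k < N) t k * eps k *: e k = z.
  move=> t tE; rewrite /z big_nat_cond [RHS]big_nat_cond; apply: eq_bigr.
  by move=> k /andP[/andP[_ kN] _]; rewrite tE.
have zs : forall k, (k < N)%N -> k == N = false by move=> k kN; rewrite ltn_eqF.
apply: (@conv_step _ _ _ (eps N)); first exact: ae.
  have := H _ ss1; rewrite big_nat_recr //= zE; last by move=> k kN; rewrite /s1 zs.
  by rewrite /s1 eqxx mul1r addrA.
have := H _ ss2; rewrite big_nat_recr //= zE; last by move=> k kN; rewrite /s2 zs.
by rewrite /s2 eqxx mulN1r scaleNr addrA.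
Qed.

Lemma sup_le (e : nat -> X) (f : nat -> X -> R) (eps : nat -> R) (r : R) (x : X) :
  normalized_schauder_basis e f -> brick e f eps x -> signs_ok e eps r -> `|x| <= r.
Proof.
move=> [_ [cx _]] bx H; apply: (@norm_lim_le (series (fun k => f k x *: e k)) x r (cx x)) => N.
have := @finite_convex e eps r (fun k => f k x) N bx 0.
rewrite add0r; apply => s ss; rewrite add0r; exact: partial_bound.
Qed.


Lemma block_eq (e : nat -> X) (F : nat -> R) (p m n : nat) : (p <= m <= n)%N ->
  \sum_(p <= k < n) (if (m <= k)%N then F k else 0) *: e k =
  \sum_(m <= k < n) F k *: e k.
Proof.
move=> /andP[pm mn]; rewrite (big_cat_nat pm mn) /=.
rewrite [X in (X + _)%R]big_nat_cond [X in (X + _)%R]big1 ?add0r; last first.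
  by move=> k /andP[/andP[_ km] _]; rewrite leqNgt km scale0r.
rewrite big_nat_cond [RHS]big_nat_cond; apply: eq_bigr.
by move=> k /andP[/andP[-> _] _].
Qed.

Lemma brick_cvg (e : nat -> X) (f : nat -> X -> R) (eps theta : nat -> R) :
  normalized_schauder_basis e f -> (forall n, 0 <= eps n) ->
  compact (brick e f eps) -> is_sign theta ->
  cvgn (series (fun k => theta k * eps k *: e k)).
Proof.
move=> Bs e0 Kc ts.
set K := brick e f eps.
pose c k := theta k * eps k.
have ce : forall k, `|c k| <= eps k.
  move=> k; rewrite /c normrM (ger0_norm (e0 k)).
  by case: (ts k) => ->; rewrite ?normrN normr1 mul1r.
have [B HB] : exists B, forall x, K x -> `|x| <= B.
  have [M [Mr HM]] := compact_bounded Kc.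
  by exists (M + 1) => x Kx; apply: (HM (M + 1)); rewrite ?ltrDl.
apply: cauchy_cvg; apply/cauchy_seriesP => eta eta0.
suff [M HM] : exists M, forall m n, (M <= m)%N -> (M <= n)%N ->
    `|\sum_(m <= k < n) theta k * eps k *: e k| < eta.
  exists ([set m | (M <= m)%N], [set m | (M <= m)%N]); first by split; exists M.
  by case=> m n /= [Mm Mn]; apply: HM.
apply: contrapT => Hn.
have Hb : forall M, exists p : nat * nat, [/\ (M <= p.1)%N, (p.1 <= p.2)%N &
    eta <= `|\sum_(p.1 <= k < p.2) theta k * eps k *: e k|].
  move=> M; apply: contrapT => HM; apply: Hn; exists M => m n Mm Mn.
  have [mn|nm] := leqP m n.
    rewrite ltNge; apply/negP => h; apply: HM; by exists (m, n).
  by rewrite big_geq ?normr0 // ltnW.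
have [g Hg] := choice Hb.
pose u j := \sum_((g j).1 <= k < (g j).2) theta k * eps k *: e k.
have uK : forall j, K (u j).
  move=> j; have [_ mn _] := Hg j.
  rewrite /u -(@block_eq e c 0); last by rewrite leq0n mn.
  apply: in_brick => // k; case: ifP => _; rewrite ?normr0 //.
have FK : (u @ \oo) K by exists 0%N => // j _; exact: uK.
have [w [Kw clw]] := Kc (u @ \oo) _ FK.
have eta4 : 0 < eta / 4 by rewrite divr_gt0.
have close : forall M, exists j, (M <= j)%N /\ `|w - u j| < eta / 4.
  move=> M.
  have Fu : (u @ \oo) (u @` [set j | (M <= j)%N]).
    by apply: filterS (nbhs_infty_ge M) => j Mj; exists j.
  have [x [[j Mj <-] bj]] := clw _ _ Fu (nbhsx_ballx w _ eta4).
  by exists j; split => //; move: bj; rewrite -ball_normE.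
have [h Hh] := choice close.
pose J := fix J i := if i is i'.+1 then h (g (J i')).2 else h 0%N.
have Jh : forall i, exists M, J i = h M by case=> [|i]; [exists 0%N|exists (g (J i)).2].
have Jc : forall i, `|w - u (J i)| < eta / 4.
  by move=> i; have [M ->] := Jh i; have [] := Hh M.
pose E i := if i is i'.+1 then (g (J i')).2 else 0%N.
have EJ : forall i, (E i <= (g (J i)).1)%N.
  case=> [|i] //=; have [h1 _] := Hh (g (J i)).2.
  have [h2 _ _] := Hg (h (g (J i)).2); exact: leq_trans h1 h2.
have inv : forall i, exists a : nat -> R, (forall k, `|a k| <= eps k) /\
    \sum_(0 <= t < i) u (J t) = \sum_(0 <= k < E i) a k *: e k.
  elim=> [|i [a [ae IH]]].
    by exists (fun=> 0); split => [k|]; rewrite ?normr0 ?big_geq.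
  have [mn1 mn2 _] := Hg (J i).
  exists (fun k => if (k < E i)%N then a k
                   else if ((g (J i)).1 <= k)%N then c k else 0).
  split.
    move=> k; case: ifP => _; first exact: ae.
    by case: ifP => _; [exact: ce | rewrite normr0].
  have EiE : (E i <= E i.+1)%N by rewrite (leq_trans (EJ i) mn2).
  rewrite big_nat_recr //= IH (big_cat_nat (leq0n (E i)) EiE) /=.
  congr (_ + _).
    rewrite big_nat_cond [RHS]big_nat_cond; apply: eq_bigr.
    by move=> k /andP[/andP[_ kE] _]; rewrite kE.
  rewrite /u -(@block_eq e c (E i)); last by rewrite EJ mn2.
  apply: eq_big_nat => k /andP[Ek _].
  by rewrite ltnNge Ek.
have ZK : forall i, K (\sum_(0 <= t < i) u (J t)).
  by move=> i; have [a [ae ->]] := inv i; exact: in_brick.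
have Zc : forall i, `|\sum_(0 <= t < i) u (J t) - i%:R *: w| <= i%:R * (eta / 4).
  elim=> [|i IH]; first by rewrite big_geq // scale0r subr0 normr0 mul0r.
  rewrite big_nat_recr //= mulrSr scalerDl scale1r.
  have -> : \sum_(0 <= t < i) u (J t) + u (J i) - (i%:R *: w + w) =
      (\sum_(0 <= t < i) u (J t) - i%:R *: w) + (u (J i) - w).
    by rewrite opprD addrACA.
  rewrite mulrDl mul1r (le_trans (ler_normD _ _)) // lerD // distrC ltW //.
have wlb : eta - eta / 4 <= `|w|.
  have [_ _ h0] := Hg (J 0%N).
  have := Jc 0%N; have := ler_normB w (w - u (J 0%N)).
  rewrite opprB addrCA subrr addr0 => h1 h2.
  rewrite /u in h1 h2; lra.
have Zlb : forall i, i%:R * (eta / 2) <= `|\sum_(0 <= t < i) u (J t)|.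
  move=> i; set Z := \sum_(0 <= t < i) u (J t).
  have h1 := Zc i.
  have := ler_normB Z (Z - i%:R *: w).
  rewrite opprB addrCA subrr addr0 normrZ ger0_norm // => h2.
  have h4 : i%:R * (eta - eta / 4) <= i%:R * `|w| by rewrite ler_wpM2l.
  have -> : i%:R * (eta / 2) = i%:R * (eta - eta / 4) - i%:R * (eta / 4) by field.
  lra.
pose i := (Num.truncn (B / (eta / 2))).+1.
have h1 := HB _ (ZK i).
have h2 := Zlb i.
have : B < i%:R * (eta / 2).
  rewrite -ltr_pdivrMr ?divr_gt0 //; exact: truncnS_gt.
lra.
Qed.


Local Open Scope ereal_scope.

Lemma key_ub (e : nat -> X) (f : nat -> X -> R) (eps : nat -> R) (x : X) :
  normalized_schauder_basis e f -> brick e f eps x ->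
  (`|x|)%:E <= r_unc e eps.
Proof.
move=> Bs bx; case E: (r_unc e eps) => [r| |].
- rewrite lee_fin; apply: (sup_le Bs bx) => th ts.
  have : (if `[< cvgn (series (fun k => th k * eps k *: e k)) >]
          then (`|limn (series (fun k => th k * eps k *: e k))|)%:E
          else +oo) <= r%:E.
    by rewrite -E; apply: ereal_sup_ubound; exists th.
  by case: asboolP => // cv; rewrite lee_fin.
- by rewrite leey.
- have : (if `[< cvgn (series (fun k => (fun=> 1%R : R) k * eps k *: e k)) >]
          then (`|limn (series (fun k => (fun=> 1%R : R) k * eps k *: e k))|)%:E
          else +oo) <= -oo.
    by rewrite -E; apply: ereal_sup_ubound; exists (fun=> 1%R) => // k; left.
  by case: asboolP.
Qed.

Lemma brick_ub (e : nat -> X) (f : nat -> X -> R) (eps : nat -> R) :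
  normalized_schauder_basis e f -> (forall n, (0 <= eps n)%R) ->
  compact (brick e f eps) -> r_unc e eps <= sup_norm (brick e f eps).
Proof.
move=> Bs e0 Kc; apply: ge_ereal_sup => _ [th ts <-].
have cv := brick_cvg Bs e0 Kc ts.
rewrite asboolT //.
have inK : forall n, brick e f eps (series (fun k => th k * eps k *: e k) n).
  move=> n; rewrite /series /=; apply: in_brick => // k.
  rewrite normrM (ger0_norm (e0 k)).
  by case: (ts k) => ->; rewrite ?normrN normr1 mul1r.
case E: (sup_norm _) => [s| |].
- rewrite lee_fin; apply: norm_lim_le; first exact: cv.
  move=> n.
  have : (`|series (fun k => th k * eps k *: e k) n|)%:E <= s%:E.
    by rewrite -E; apply: ereal_sup_ubound; exists (series (fun k => th k * eps k *: e k) n).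
  by rewrite lee_fin.
- by rewrite leey.
- have : (`|(0%R : X)|)%:E <= sup_norm (brick e f eps).
    apply: ereal_sup_ubound; exists 0%R => //.
    by have := inK 0%N; rewrite /series /= big_geq.
  by rewrite E normr0.
Qed.

End Aux.
Unset Implicit Arguments.

Theorem proposition4p2 (R : realType) (X : completeNormedModType R) :
  (forall A B : set X, A `<=` B ->
     (entropy A <= entropy B)%E /\ (entropy0 A <= entropy0 B)%E) /\
  (forall A : set X,
     (entropy A <= entropy0 A)%E /\ (sup_norm A <= entropy A)%E) /\
  (forall (e : nat -> X) (f : nat -> X -> R) (eps : nat -> R),
     normalized_schauder_basis e f -> (forall n, 0 <= eps n) ->
     compact (brick e f eps) ->
     entropy (brick e f eps) = sup_norm (brick e f eps)) /\
  (forall (e : nat -> X) (f : nat -> X -> R) (eps : nat -> R),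
     normalized_schauder_basis e f -> one_unconditional e f ->
     (forall n, 0 <= eps n) ->
     compact (brick e f eps) ->
     entropy0 (brick e f eps) = sup_norm (brick e f eps)).
Proof.
have P2 : forall A : set X,
    (entropy A <= entropy0 A)%E /\ (sup_norm A <= entropy A)%E.
  move=> A; split.
    apply: le_ereal_inf => r [e0 [f0 [eps0 [[H1 _] H2 H3 H4]]]].
    by exists e0, f0, eps0; split.
  apply: le_ereal_inf_tmp => r [e0 [f0 [eps0 [Bs H2 H3 ->]]]].
  by apply: ge_ereal_sup => _ [x Ax <-]; apply: key_ub Bs (H3 _ Ax).
split.
  move=> A B AB; split.
    apply: le_ereal_inf => r [e0 [f0 [eps0 [H1 H2 H3 H4]]]].
    by exists e0, f0, eps0; split => //; apply: subset_trans AB H3.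
  apply: le_ereal_inf => r [e0 [f0 [eps0 [H1 H2 H3 H4]]]].
  by exists e0, f0, eps0; split => //; apply: subset_trans AB H3.
split; first exact: P2.
split.
  move=> e f eps Bs e0 Kc; apply/eqP; rewrite eq_le; apply/andP; split; last first.
    by have [] := P2 (brick e f eps).
  apply: le_trans (brick_ub Bs e0 Kc).
  by apply: ereal_inf_lbound; exists e, f, eps; split.
move=> e f eps Bs Bu e0 Kc; apply/eqP; rewrite eq_le; apply/andP; split; last first.
  by have [h1 h2] := P2 (brick e f eps); apply: le_trans h2 h1.
apply: le_trans (brick_ub Bs e0 Kc).
by apply: ereal_inf_lbound; exists e, f, eps; split.
Qed.
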